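(* For every $T\in[0,\infty]$ there exists a joint strategy $\pi^*\in\Pi$ such that $$J_T(\pi^* )=\inf_{\pi\in\Pi}J_T(\pi).$$
   Context: Let $G=(V,E,A,\phi)$ be a finite connected undirected graph with node set $V$, edge set $E$, edge lengths $A:E\to\mathbb{R}_{>0}$ and node weights $\phi:V\to\mathbb{R}_{>0}$. Let $|G|$ be its metric graph (each edge $e$ realized as a closed interval of length $A(e)$ glued at its endpoints) with the shortest-path metric $d$. Fix $k\ge 1$ robots $r_1,\dots,r_k$ and equip $|G|^k$ with $d_k(p,p')=\max_{i}d(p_i,p'_i)$. The set of feasible joint strategies is $\Pi=\{\pi\in C([0,\infty),|G|^k):\ d_k(\pi(t),\pi(t'))\le |t-t'|\ \forall t,t'\ge0\}$, and we write $\pi=(\pi_{r_1},\dots,\pi_{r_k})$. For $v\in V$ and $t\ge0$ let $\tau^\pi(v,t)=\sup\{t'\le t:\ \pi_r(t')=v\text{ for some }r\}$ if this set is nonempty and $\tau^\pi(v,t)=0$ otherwise; the latency is $L^\pi_v(t)=t-\tau^\pi(v,t)$ and the instantaneous worst weighted latency is $M^\pi(t)=\max_{v\in V}\phi(v)L^\pi_v(t)$. For $T\in[0,\infty)$ set $J_T(\pi)=\sup_{t\ge T}M^\pi(t)\in[0,\infty]$, and $J_\infty(\pi)=\limsup_{t\to\infty}M^\pi(t)$. *)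

(* Defs.v *)
From HB Require Import structures.
From mathcomp Require Import all_boot all_order all_algebra.
From mathcomp Require Import all_classical all_reals.
From mathcomp Require Import ereal.

Set Implicit Arguments.
Unset Strict Implicit.
Unset Printing Implicit Defensive.

Import Order.TTheory GRing.Theory Num.Theory.
Local Open Scope classical_set_scope.
Local Open Scope ring_scope.

Section MetricGraph.
Variables (R : realType) (V E : finType).
(* each edge e has endpoints (ends e).1 and (ends e).2 (loops/multi-edges allowed) *)
Variable ends : E -> V * V.
(* edge lengths A and node weights phi *)
Variable A : E -> R.
Variable phi : V -> R.

(* oriented edge: (e, true) goes from (ends e).1 to (ends e).2 *)
Definition osrc (x : E * bool) : V := if x.2 then (ends x.1).1 else (ends x.1).2.
Definition otgt (x : E * bool) : V := if x.2 then (ends x.1).2 else (ends x.1).1.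

Fixpoint is_walk (u v : V) (w : seq (E * bool)) : bool :=
  match w with
  | [::] => u == v
  | x :: w' => (osrc x == u) && is_walk (otgt x) v w'
  end.

Definition walk_len (w : seq (E * bool)) : R := \sum_(x <- w) A x.1.

Definition connected_graph : Prop :=
  (0 < #|V|)%N /\ forall u v : V, exists w, is_walk u v w.

Definition ndist (u v : V) : R := inf [set walk_len w | w in [set w | is_walk u v w]].

(* Points of the metric graph |G|: a node, or an interior point of edge e at
   distance s from (ends e).1, with 0 < s < A e. *)
Inductive mpoint : Type :=
| PNode of V
| PEdge of E & R.

Definition valid_point (p : mpoint) : Prop :=
  match p with
  | PNode _ => True
  | PEdge e s => 0 < s < A e
  end.

(* the endpoints through which a point can be left, with the distance to them *)
Definition anchors (p : mpoint) : seq (V * R) :=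
  match p with
  | PNode v => [:: (v, 0)]
  | PEdge e s => [:: ((ends e).1, s); ((ends e).2, A e - s)]
  end.

(* the shortest-path metric d of |G| : either go along the common edge, or
   leave p through an endpoint, travel in G, and enter q through an endpoint *)
Definition mdist (p q : mpoint) : R :=
  inf ([set x | exists a b, a \in anchors p /\ b \in anchors q /\
                            x = a.2 + ndist a.1 b.1 + b.2]
       `|` [set x | exists e s t, p = PEdge e s /\ q = PEdge e t /\ x = `|s - t|]).

Variable k : nat.

(* joint strategies: pi t r is the position of robot r at time t (only t >= 0 matters) *)
Definition strategy := R -> 'I_k -> mpoint.

(* the feasible set Pi: valid positions and d_k-1-Lipschitz on [0,oo)
   (d_k(p,p') <= c  iff  d(p_r,p'_r) <= c for all r); continuity follows. *)
Definition feasible (pi : strategy) : Prop :=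
  (forall t, 0 <= t -> forall r, valid_point (pi t r)) /\
  (forall t t', 0 <= t -> 0 <= t' -> forall r, mdist (pi t r) (pi t' r) <= `|t - t'|).

Definition last_visit (pi : strategy) (v : V) (t : R) : R :=
  let S := [set t' | 0 <= t' <= t /\ exists r, pi t' r = PNode v] in
  if `[< S !=set0 >] then sup S else 0.

Definition latency (pi : strategy) (v : V) (t : R) : R := t - last_visit pi v t.

(* instantaneous worst weighted latency (all terms are >= 0 for t >= 0) *)
Definition worst_latency (pi : strategy) (t : R) : R :=
  \big[Num.max/0]_(v : V) (phi v * latency pi v t).

Definition J_fin (T : R) (pi : strategy) : \bar R :=
  ereal_sup [set (worst_latency pi t)%:E | t in [set t | T <= t]].

(* J_oo = limsup_{t -> oo} M^pi(t) = inf_{T >= 0} sup_{t >= T} M^pi(t) *)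
Definition J_inf (pi : strategy) : \bar R :=
  ereal_inf [set J_fin T pi | T in [set T | 0 <= T]].

Definition J (T : \bar R) (pi : strategy) : \bar R :=
  match T with
  | EFin T' => J_fin T' pi
  | +oo%E => J_inf pi
  | -oo%E => J_fin 0 pi (* unused: T >= 0 *)
  end.

End MetricGraph.

(* Main.v *)
From Pilot Require Import Defs.
From HB Require Import structures.
From mathcomp Require Import all_boot all_order all_algebra.
From mathcomp Require Import all_classical all_reals.
From mathcomp Require Import ereal.
From mathcomp Require Import lra.
Import Order.TTheory GRing.Theory Num.Theory.
Local Open Scope classical_set_scope.
Local Open Scope ring_scope.

Lemma inf_le_of (R : realType) (S : set R) c x :
  (forall y, S y -> c <= y) -> S x -> inf S <= x.
Proof. by move=> hc Sx; apply: ge_inf => //; exists c => y /hc. Qed.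

Lemma le_inf_of (R : realType) (S : set R) c x :
  S x -> (forall y, S y -> c <= y) -> c <= inf S.
Proof. by move=> Sx hc; apply: lb_le_inf; [exists x|move=> y /hc]. Qed.

Lemma walk_len_ge0 (R : realType) (E : finType) (A : E -> R) w :
  (forall e, 0 < A e) -> 0 <= walk_len A w.
Proof. by move=> hA; rewrite /walk_len; apply: sumr_ge0 => x _; apply/ltW. Qed.

Lemma walk_len_cat (R : realType) (E : finType) (A : E -> R) w1 w2 :
  walk_len A (w1 ++ w2) = walk_len A w1 + walk_len A w2.
Proof. by rewrite /walk_len big_cat. Qed.

Lemma is_walk_cat (V E : finType) (ends : E -> V * V) u v x w1 w2 :
  is_walk ends u v w1 -> is_walk ends v x w2 -> is_walk ends u x (w1 ++ w2).
Proof.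
elim: w1 u => [|y w1 IH] u /=; first by move/eqP->.
by case/andP=> -> /IH H /H ->.
Qed.

Lemma ndist_le (R : realType) (V E : finType) (ends : E -> V * V) (A : E -> R) u v w :
  (forall e, 0 < A e) -> is_walk ends u v w -> ndist ends A u v <= walk_len A w.
Proof.
move=> hA hw; apply: (@inf_le_of _ _ 0); last by exists w.
by move=> y [w' _ <-]; apply: walk_len_ge0.
Qed.

Lemma ndist_ge0 (R : realType) (V E : finType) (ends : E -> V * V) (A : E -> R) u v :
  (forall e, 0 < A e) -> (exists w, is_walk ends u v w) -> 0 <= ndist ends A u v.
Proof.
move=> hA [w hw]; apply: (@le_inf_of _ _ _ (walk_len A w)); first by exists w.
by move=> y [w' _ <-]; apply: walk_len_ge0.
Qed.

Lemma ndist_refl (R : realType) (V E : finType) (ends : E -> V * V) (A : E -> R) u :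
  (forall e, 0 < A e) -> ndist ends A u u = 0.
Proof.
move=> hA; apply/eqP; rewrite eq_le; apply/andP; split.
  by have := @ndist_le _ _ _ ends A u u [::] hA (eqxx _); rewrite /walk_len big_nil.
by apply: ndist_ge0 => //; exists [::] => /=.
Qed.

Lemma ndist_tri (R : realType) (V E : finType) (ends : E -> V * V) (A : E -> R) u v x :
  (forall e, 0 < A e) -> (forall a b, exists w, is_walk ends a b w) ->
  ndist ends A u x <= ndist ends A u v + ndist ends A v x.
Proof.
move=> hA hc.
have H1 : forall w2, is_walk ends v x w2 ->
    ndist ends A u x - walk_len A w2 <= ndist ends A u v.
  move=> w2 h2; have [w0 h0] := hc u v.
  apply: (@le_inf_of _ _ _ (walk_len A w0)); first by exists w0.
  move=> y [w1 h1 <-]; rewrite lerBlDr -walk_len_cat.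
  by apply: ndist_le => //; apply: is_walk_cat h1 h2.
rewrite addrC -lerBlDr.
have [w0 h0] := hc v x.
apply: (@le_inf_of _ _ _ (walk_len A w0)); first by exists w0.
by move=> y [w2 h2 <-]; rewrite lerBlDr addrC -lerBlDr; apply: H1.
Qed.

Lemma ndist_edge12 (R : realType) (V E : finType) (ends : E -> V * V) (A : E -> R) e :
  (forall e, 0 < A e) -> ndist ends A (ends e).1 (ends e).2 <= A e.
Proof.
move=> hA; have := @ndist_le _ _ _ ends A (ends e).1 (ends e).2 [:: (e, true)] hA.
by rewrite /walk_len big_seq1 /= /osrc /otgt /= !eqxx; apply.
Qed.

Lemma ndist_edge21 (R : realType) (V E : finType) (ends : E -> V * V) (A : E -> R) e :
  (forall e, 0 < A e) -> ndist ends A (ends e).2 (ends e).1 <= A e.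
Proof.
move=> hA; have := @ndist_le _ _ _ ends A (ends e).2 (ends e).1 [:: (e, false)] hA.
by rewrite /walk_len big_seq1 /= /osrc /otgt /= !eqxx; apply.
Qed.


Set Implicit Arguments. Unset Strict Implicit.

Lemma anchors_ge0 (R : realType) (V E : finType) (ends : E -> V * V) (A : E -> R) p a :
  valid_point A p -> a \in anchors ends A p -> 0 <= a.2.
Proof.
case: p => [v|e s] /=; first by rewrite inE => _ /eqP ->.
case/andP=> s0 sA; rewrite !inE => /orP[] /eqP -> /=; first exact: ltW.
by rewrite subr_ge0 ltW.
Qed.

Definition mset (R : realType) (V E : finType) (ends : E -> V * V) (A : E -> R) p q :=
  [set x | exists a b, a \in anchors ends A p /\ b \in anchors ends A q /\
                            x = a.2 + ndist ends A a.1 b.1 + b.2]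
       `|` [set x | exists e s t, p = PEdge V e s /\ q = PEdge V e t /\ x = `|s - t|].

Lemma mdistE (R : realType) (V E : finType) (ends : E -> V * V) (A : E -> R) p q :
  Pilot.Defs.mdist ends A p q = inf (mset ends A p q).
Proof. by []. Qed.

Lemma mset_ge0 (R : realType) (V E : finType) (ends : E -> V * V) (A : E -> R) p q y :
  (forall e, 0 < A e) -> (forall a b, exists w, is_walk ends a b w) ->
  valid_point A p -> valid_point A q -> mset ends A p q y -> 0 <= y.
Proof.
move=> hA hc vp vq [[a [b [ha [hb ->]]]]|[e [s [t [_ [_ ->]]]]]] //.
by rewrite !addr_ge0 // ?(anchors_ge0 vp ha) ?(anchors_ge0 vq hb) // ndist_ge0.
Qed.

Lemma mdist_le_anch (R : realType) (V E : finType) (ends : E -> V * V) (A : E -> R) p q a b :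
  (forall e, 0 < A e) -> (forall a b, exists w, is_walk ends a b w) ->
  valid_point A p -> valid_point A q ->
  a \in anchors ends A p -> b \in anchors ends A q ->
  Pilot.Defs.mdist ends A p q <= a.2 + ndist ends A a.1 b.1 + b.2.
Proof.
move=> hA hc vp vq ha hb; rewrite mdistE; apply: (@inf_le_of _ _ 0).
  by move=> y; apply: mset_ge0.
by left; exists a, b.
Qed.

Lemma mdist_le_edge (R : realType) (V E : finType) (ends : E -> V * V) (A : E -> R) e s t :
  (forall e, 0 < A e) -> (forall a b, exists w, is_walk ends a b w) ->
  valid_point A (PEdge V e s) -> valid_point A (PEdge V e t) ->
  Pilot.Defs.mdist ends A (PEdge V e s) (PEdge V e t) <= `|s - t|.
Proof.
move=> hA hc vp vq; rewrite mdistE; apply: (@inf_le_of _ _ 0).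
  by move=> y; apply: mset_ge0.
by right; exists e, s, t.
Qed.

Lemma mdist_ge (R : realType) (V E : finType) (ends : E -> V * V) (A : E -> R) p q c :
  (forall y, mset ends A p q y -> c <= y) -> c <= Pilot.Defs.mdist ends A p q.
Proof.
move=> H; rewrite mdistE.
have [a ha] : exists a, a \in anchors ends A p by move: H; case: p => [v|e s] /= _; eexists; exact: mem_head.
have [b hb] : exists b, b \in anchors ends A q by move: H; case: q => [v|e s] /= _; eexists; exact: mem_head.
by apply: (@le_inf_of _ _ _ (a.2 + ndist ends A a.1 b.1 + b.2)) H; left; exists a, b.
Qed.


Lemma anch_pair (R : realType) (V E : finType) (ends : E -> V * V) (A : E -> R) q b c :
  (forall e, 0 < A e) -> (forall a b, exists w, is_walk ends a b w) ->
  valid_point A q -> b \in anchors ends A q -> c \in anchors ends A q ->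
  ndist ends A b.1 c.1 <= b.2 + c.2.
Proof.
move=> hA hc; case: q => [v|e s] /=.
  by move=> _; rewrite !inE => /eqP -> /eqP ->; rewrite ndist_refl // addr0.
case/andP=> s0 sA; rewrite !inE => /orP[] /eqP -> /orP[] /eqP -> /=.
- by rewrite ndist_refl // addr_ge0 // ltW.
- by rewrite addrC subrK ndist_edge12.
- by rewrite subrK ndist_edge21.
- by rewrite ndist_refl // addr_ge0 // subr_ge0 ltW.
Qed.

Lemma anch_shift (R : realType) (V E : finType) (ends : E -> V * V) (A : E -> R) e s t c :
  c \in anchors ends A (PEdge V e t) ->
  exists a, [/\ a \in anchors ends A (PEdge V e s), a.1 = c.1 & a.2 <= `|s - t| + c.2].
Proof.
rewrite !inE => /orP[] /eqP ->.
  exists ((ends e).1, s); split => //=; first by rewrite mem_head.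
  by have := ler_norm (s - t); lra.
exists ((ends e).2, A e - s); split => //=; first by rewrite !inE eqxx orbT.
by have := ler_norm (t - s); rewrite distrC; lra.
Qed.

Lemma mdist_tri (R : realType) (V E : finType) (ends : E -> V * V) (A : E -> R) p q r :
  (forall e, 0 < A e) -> (forall a b, exists w, is_walk ends a b w) ->
  valid_point A p -> valid_point A q -> valid_point A r ->
  Pilot.Defs.mdist ends A p r <= Pilot.Defs.mdist ends A p q + Pilot.Defs.mdist ends A q r.
Proof.
move=> hA hc vp vq vr.
have key : forall x y, mset ends A p q x -> mset ends A q r y ->
    Pilot.Defs.mdist ends A p r <= x + y.
  move=> x y [[a [b [ha [hb ->]]]]|[e [s [t [ep [eq ->]]]]]]
             [[c [d [hc' [hd ->]]]]|[e' [t' [u [eq' [er ->]]]]]].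
  - apply: le_trans (mdist_le_anch hA hc vp vr ha hd) _.
    have h1 := @ndist_tri _ _ _ ends A a.1 b.1 d.1 hA hc.
    have h2 := @ndist_tri _ _ _ ends A b.1 c.1 d.1 hA hc.
    have h3 := anch_pair hA hc vq hb hc'.
    lra.
  - subst q r.
    have [d [hd d1 d2]] := anch_shift u hb.
    apply: le_trans (mdist_le_anch hA hc vp vr ha hd) _; rewrite d1.
    move: d2; rewrite distrC; lra.
  - subst p q.
    have [a [ha a1 a2]] := anch_shift s hc'.
    apply: le_trans (mdist_le_anch hA hc vp vr ha hd) _; rewrite a1; lra.
  - subst p r; rewrite eq' in eq; case: eq => ??; subst.
    apply: le_trans (mdist_le_edge hA hc vp vr) _; exact: ler_distD.
have H1 : forall y, mset ends A q r y ->
    Pilot.Defs.mdist ends A p r - y <= Pilot.Defs.mdist ends A p q.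
  by move=> y hy; apply: mdist_ge => x hx; rewrite lerBlDr; apply: key.
rewrite addrC -lerBlDr; apply: mdist_ge => y hy.
by rewrite lerBlDr addrC -lerBlDr; apply: H1.
Qed.


Record ultra (U : set (set nat)) : Prop := Ultra {
  uI : forall X Y, U X -> U Y -> U (X `&` Y);
  uS : forall X Y, X `<=` Y -> U X -> U Y;
  u0 : ~ U set0;
  uC : forall X, U X \/ U (~` X);
  uN : forall N, U [set n | (N <= n)%N] }.

Lemma ultra_exists : exists U, ultra U.
Proof.
have [G [GU sub]] := ultraFilterLemma eventually_filter.
exists G; split.
- by move=> X Y; apply: filterI.
- by move=> X Y XY; apply: filterS.
- by move=> /filter_ex [].
- by move=> X; apply: in_ultra_setVsetC.
- by move=> N; apply: sub; exists N.
Qed.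

Lemma u_ne (U : set (set nat)) (X : set nat) : ultra U -> U X -> exists n, X n.
Proof.
move=> hU UX; apply: contrapT => hne; apply: (u0 hU).
by apply: (uS hU) UX => n Xn; apply: hne; exists n.
Qed.

Lemma u_fin (U : set (set nat)) (T : finType) (f : nat -> T) : ultra U -> exists c, U [set n | f n = c].
Proof.
move=> hU; apply: contrapT => hne.
have H : forall l : seq T, U [set n | all (fun c => f n != c) l].
  elim=> [|c l IH] /=; first by apply: (uS hU) (uN hU 0) => n.
  have [Uc|UCc] := uC hU [set n | f n = c]; first by case: hne; exists c.
  by apply: (uS hU) (uI hU UCc IH) => n [/= /eqP -> ->].
apply: (u0 hU); apply: (uS hU) (H (enum T)) => n /= /allP /(_ (f n)).
by rewrite mem_enum eqxx => /(_ isT).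
Qed.

Lemma u_real (R : realType) (U : set (set nat)) (x : nat -> R) lo hi : ultra U ->
  (forall n, lo <= x n <= hi) ->
  exists s, lo <= s <= hi /\ forall eps, 0 < eps -> U [set n | `|x n - s| < eps].
Proof.
move=> hU hx.
pose S := [set a | U [set n | a <= x n]].
have Slo : S lo by apply: (uS hU) (uN hU 0) => n _; have /andP[] := hx n.
have Sub : forall a, S a -> a <= hi.
  move=> a Sa; rewrite leNgt; apply/negP => ahi; apply: (u0 hU).
  apply: (uS hU) Sa => n /= an; have /andP[_ h] := hx n; lra.
have hsup : has_sup S by split; [exists lo|exists hi => a /Sub].
exists (sup S); split.
  apply/andP; split; first by apply: ub_le_sup => //; case: hsup.
  by apply: ge_sup; [exists lo|move=> a /Sub].
move=> eps e0.
have [a Sa alt] := sup_adherent e0 hsup.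
have U1 : U [set n | sup S - eps < x n].
  by apply: (uS hU) Sa => n /= an; lra.
have U2 : U [set n | x n < sup S + eps].
  have [//|UC] := uC hU [set n | x n < sup S + eps].
  have : S (sup S + eps).
    by apply: (uS hU) UC => n /= /negP; rewrite -leNgt.
  move=> /(ub_le_sup (proj2 hsup)) => h; lra.
by apply: (uS hU) (uI hU U1 U2) => n [/= h1 h2]; rewrite ltr_norml; apply/andP; split; lra.
Qed.


Definition cellof (R : realType) (V E : finType) (p : mpoint R V E) : (V + E)%type :=
  match p with PNode v => inl v | PEdge e _ => inr e end.

Definition posof (R : realType) (V E : finType) (e : E) (p : mpoint R V E) : R :=
  match p with PNode _ => 0 | PEdge e' s => if e' == e then s else 0 end.

Lemma mdist_nn (R : realType) (V E : finType) (ends : E -> V * V) (A : E -> R) v :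
  (forall e, 0 < A e) -> (forall a b, exists w, is_walk ends a b w) ->
  Pilot.Defs.mdist ends A (PNode R E v) (PNode R E v) <= 0.
Proof.
move=> hA hc.
have := mdist_le_anch (p := PNode R E v) (q := PNode R E v) hA hc I I (mem_head _ _) (mem_head _ _).
by rewrite /= ndist_refl // !addr0.
Qed.

Lemma ulim_point (R : realType) (V E : finType) (ends : E -> V * V) (A : E -> R)
  (U : set (set nat)) (p : nat -> mpoint R V E) :
  (forall e, 0 < A e) -> (forall a b, exists w, is_walk ends a b w) -> ultra U ->
  (forall n, valid_point A (p n)) ->
  exists q, valid_point A q /\ forall eps, 0 < eps ->
    U [set n | Pilot.Defs.mdist ends A q (p n) <= eps /\ Pilot.Defs.mdist ends A (p n) q <= eps].
Proof.
move=> hA hc hU hv.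
have [[v|e] hcell] := u_fin (fun n => cellof (p n)) hU.
  exists (PNode R E v); split => // eps e0.
  apply: (uS hU) hcell => n /=; move: (hv n); case: (p n) => [v'|e' s] //= _ [->].
  by have := mdist_nn v hA hc; split; lra.
have hb : forall n, 0 <= posof e (p n) <= A e.
  move=> n; move: (hv n); case: (p n) => [v'|e' s] /=.
    by rewrite lexx ltW.
  case: eqP => [-> /andP[h1 h2]|_ _]; first by rewrite !ltW.
  by rewrite lexx ltW.
have [s [/andP[s0 sA] hs]] := u_real hU hb.
have key : forall q, valid_point A q ->
   (forall t, valid_point A (PEdge V e t) ->
      Pilot.Defs.mdist ends A q (PEdge V e t) <= `|t - s| /\
      Pilot.Defs.mdist ends A (PEdge V e t) q <= `|t - s|) ->
   exists q, valid_point A q /\ forall eps, 0 < eps ->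
    U [set n | Pilot.Defs.mdist ends A q (p n) <= eps /\ Pilot.Defs.mdist ends A (p n) q <= eps].
  move=> q vq hq; exists q; split => // eps e0.
  apply: (uS hU) (uI hU hcell (hs eps e0)) => n /= [hce ht].
  move: hce ht (hv n); case: (p n) => [v' //|e' t /= /(congr1 (fun c => if c is inr x then x else e)) /= ->]; rewrite eqxx => ht vt.
  by have [h1 h2] := hq t vt; split; lra.
move: s0; rewrite le_eqVlt => /orP[/eqP s0|s0].
  apply: (key (PNode R E (ends e).1) I) => t vt; have /andP[t0 tA] := vt; rewrite -s0 subr0 gtr0_norm //.
  split.
    have := mdist_le_anch (p := PNode R E (ends e).1) (q := PEdge V e t) (b := ((ends e).1, t))
      hA hc I vt (mem_head _ _) (mem_head _ _).
    by rewrite /= ndist_refl // !add0r.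
  have := mdist_le_anch (q := PNode R E (ends e).1) (p := PEdge V e t) (a := ((ends e).1, t))
      hA hc vt I (mem_head _ _) (mem_head _ _).
  by rewrite /= ndist_refl // !addr0.
move: sA; rewrite le_eqVlt => /orP[/eqP sA|sA].
  have m2 : forall t, ((ends e).2, A e - t) \in anchors ends A (PEdge V e t).
    by move=> t; rewrite !inE eqxx orbT.
  apply: (key (PNode R E (ends e).2) I) => t vt; have /andP[t0 tA] := vt; rewrite sA distrC gtr0_norm ?subr_gt0 //.
  split.
    have := mdist_le_anch (p := PNode R E (ends e).2) (q := PEdge V e t) 
      hA hc I vt (mem_head _ _) (m2 t).
    by rewrite /= ndist_refl // !add0r.
  have := mdist_le_anch (q := PNode R E (ends e).2) (p := PEdge V e t)
      hA hc vt I (m2 t) (mem_head _ _).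
  by rewrite /= ndist_refl // !addr0.
have vs : valid_point A (PEdge V e s) by rewrite /= s0 sA.
apply: (key _ vs) => t vt; split.
  by rewrite distrC; apply: mdist_le_edge.
by apply: mdist_le_edge.
Qed.


Lemma le_eps (R : realType) (x y : R) : (forall eps, 0 < eps -> x <= y + eps) -> x <= y.
Proof.
move=> H; rewrite leNgt; apply/negP => yx.
have := H ((x - y) / 2); rewrite divr_gt0 ?subr_gt0 // => /(_ isT); lra.
Qed.

Definition vset (R : realType) (V E : finType) (k : nat) (pi : strategy R V E k) v t :=
  [set t' | 0 <= t' <= t /\ exists r, pi t' r = PNode R E v].

Lemma lv_sup (R : realType) (V E : finType) (k : nat) (pi : strategy R V E k) v t :
  vset pi v t !=set0 -> last_visit pi v t = sup (vset pi v t).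
Proof. by move=> h; rewrite /last_visit; case: asboolP. Qed.

Lemma lv_empty (R : realType) (V E : finType) (k : nat) (pi : strategy R V E k) v t :
  ~ (vset pi v t !=set0) -> last_visit pi v t = 0.
Proof. by move=> h; rewrite /last_visit; case: asboolP. Qed.

Lemma vset_hsup (R : realType) (V E : finType) (k : nat) (pi : strategy R V E k) v t :
  vset pi v t !=set0 -> has_sup (vset pi v t).
Proof. by move=> h; split => //; exists t => x [/andP[]]. Qed.

Lemma lv_ge (R : realType) (V E : finType) (k : nat) (pi : strategy R V E k) v t x :
  vset pi v t x -> x <= last_visit pi v t.
Proof.
move=> hx; have ne : vset pi v t !=set0 by exists x.
by rewrite lv_sup //; apply: ub_le_sup => //; case: (vset_hsup ne).
Qed.

Lemma lv_ge0 (R : realType) (V E : finType) (k : nat) (pi : strategy R V E k) v t :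
  0 <= last_visit pi v t.
Proof.
have [[x hx]|ne] := pselect (vset pi v t !=set0); last by rewrite lv_empty.
by apply: le_trans (lv_ge hx); case: hx => /andP[].
Qed.

Lemma limit_strategy (R : realType) (V E : finType) (ends : E -> V * V) (A : E -> R) (k : nat)
  (U : set (set nat)) (pis : nat -> strategy R V E k) :
  (forall e, 0 < A e) -> (forall a b, exists w, is_walk ends a b w) -> ultra U ->
  (forall n, feasible ends A (pis n)) ->
  exists pi : strategy R V E k, feasible ends A pi /\
    forall t, 0 <= t -> forall r eps, 0 < eps ->
    U [set n | Pilot.Defs.mdist ends A (pi t r) (pis n t r) <= eps /\
               Pilot.Defs.mdist ends A (pis n t r) (pi t r) <= eps].
Proof.
move=> hA hc hU hf.
have H : forall tr : R * 'I_k, exists q, 0 <= tr.1 -> valid_point A q /\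
    forall eps, 0 < eps ->
    U [set n | Pilot.Defs.mdist ends A q (pis n tr.1 tr.2) <= eps /\
               Pilot.Defs.mdist ends A (pis n tr.1 tr.2) q <= eps].
  move=> [t r] /=; have [t0|tn] := boolP (0 <= t).
    have [q hq] := ulim_point (p := fun n => pis n t r) hA hc hU (fun n => (hf n).1 t t0 r).
    by exists q.
  by exists (pis 0%N t r).
have [f hfq] := choice H.
exists (fun t r => f (t, r)); split; last by move=> t t0 r; have [] := hfq (t, r) t0.
split; first by move=> t t0 r; have [] := hfq (t, r) t0.
move=> t t' t0 t'0 r; apply: le_eps => eps e0.
have [v1 c1] := hfq (t, r) t0; have [v2 c2] := hfq (t', r) t'0.
have e2 : 0 < eps / 2 by rewrite divr_gt0.
have [n [[h1 h1'] [h2 h2']]] := u_ne hU (uI hU (c1 _ e2) (c2 _ e2)).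
have vn : valid_point A (pis n t r) := (hf n).1 t t0 r.
have vn' : valid_point A (pis n t' r) := (hf n).1 t' t'0 r.
have := (hf n).2 t t' t0 t'0 r.
have := mdist_tri hA hc v1 vn v2.
have := mdist_tri hA hc vn vn' v2.
simpl in *; lra.
Qed.


Lemma small_inv (R : realType) (e : R) : 0 < e ->
  exists N, forall n, (N <= n)%N -> (n.+1%:R)^-1 < e.
Proof.
move=> e0; exists (Num.Def.archi_bound e^-1) => n hn.
have ei : 0 < e^-1 by rewrite invr_gt0.
have h := archi_boundP (ltW ei).
rewrite -[e]invrK ltf_pV2 ?posrE ?invr_gt0 ?ltr0Sn //.
by apply: lt_le_trans h _; rewrite ler_nat; apply: leq_trans hn _.
Qed.

Lemma minA_pos (R : realType) (E : finType) (A : E -> R) :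
  (forall e, 0 < A e) -> 0 < \big[Order.min/1]_(e : E) A e.
Proof.
move=> hA; elim/big_ind: _ => //; first by move=> x y hx hy; rewrite lt_min hx hy.
Qed.

Lemma ndist_pos (R : realType) (V E : finType) (ends : E -> V * V) (A : E -> R) u v :
  (forall e, 0 < A e) -> (forall a b, exists w, is_walk ends a b w) -> u != v ->
  \big[Order.min/1]_(e : E) A e <= ndist ends A u v.
Proof.
move=> hA hc uv; have [w0 h0] := hc u v.
apply: (@le_inf_of _ _ _ (walk_len A w0)); first by exists w0.
move=> y [[|x w] /= hw <-]; first by rewrite (negbTE uv) in hw.
rewrite /walk_len big_cons; apply: le_trans (bigmin_le _ x.1 _) _.
by rewrite lerDl; apply: walk_len_ge0.
Qed.

Lemma mdist_node0 (R : realType) (V E : finType) (ends : E -> V * V) (A : E -> R) x v :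
  (forall e, 0 < A e) -> (forall a b, exists w, is_walk ends a b w) ->
  valid_point A x ->
  (forall eps, 0 < eps -> Pilot.Defs.mdist ends A x (PNode R E v) <= eps) ->
  x = PNode R E v.
Proof.
move=> hA hc vx H.
suff hm : x <> PNode R E v -> exists m, 0 < m /\ m <= Pilot.Defs.mdist ends A x (PNode R E v).
  by apply: contrapT => /hm [m [m0 hm']]; have := H (m / 2); rewrite divr_gt0 // => /(_ isT); lra.
clear H; case: x vx => [u|e s] /= vx hne.
  have uv : u != v by apply/eqP => uv; apply: hne; rewrite uv.
  exists (\big[Order.min/1]_(e : E) A e); split; first exact: minA_pos.
  apply: mdist_ge => y [[a [b [/= ha [hb ->]]]]|[e [s [t [//]]]]].
  move: ha hb; rewrite !inE => /eqP -> /eqP -> /=; rewrite addr0 add0r.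
  exact: ndist_pos.
case/andP: vx => s0 sA.
exists (Order.min s (A e - s)); split; first by rewrite lt_min s0 subr_gt0 sA.
apply: mdist_ge => y [[a [b [/= ha [hb ->]]]]|[e' [s' [t [_ [//]]]]]].
move: hb; rewrite inE => /eqP -> /=; rewrite addr0.
have nd := @ndist_ge0 _ _ _ ends A a.1 v hA (hc a.1 v).
move: nd; move: ha; rewrite !inE => /orP[] /eqP -> /= nd.
  by rewrite ge_min; apply/orP; left; lra.
by rewrite ge_min; apply/orP; right; lra.
Qed.


Lemma visit_limit (R : realType) (V E : finType) (ends : E -> V * V) (A : E -> R) (k : nat)
  (U : set (set nat)) (pis : nat -> strategy R V E k) (pi : strategy R V E k) t v L :
  (forall e, 0 < A e) -> (forall a b, exists w, is_walk ends a b w) -> ultra U ->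
  (forall n, feasible ends A (pis n)) -> feasible ends A pi ->
  (forall t, 0 <= t -> forall r eps, 0 < eps ->
    U [set n | Pilot.Defs.mdist ends A (pi t r) (pis n t r) <= eps /\
               Pilot.Defs.mdist ends A (pis n t r) (pi t r) <= eps]) ->
  0 <= t ->
  (forall d, 0 < d -> U [set n | latency (pis n) v t <= L + d]) ->
  latency pi v t <= L.
Proof.
move=> hA hc hU hf hpi hcl t0 hL.
apply: le_eps => d d0.
have d2 : 0 < d / 2 by rewrite divr_gt0.
have UN := hL _ d2.
rewrite /latency.
have [UP|UnP] := uC hU [set n | vset (pis n) v t !=set0]; last first.
  have [n [hn hnP]] := u_ne hU (uI hU UN UnP).
  move: hn; rewrite /= /latency lv_empty // subr0 => hn.
  have := lv_ge0 pi v t; lra.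
pose NP := [set n | latency (pis n) v t <= L + d / 2] `&` [set n | vset (pis n) v t !=set0].
have UNP : U NP := uI hU UN UP.
have [n0 [_ [x0 [_ [r0 _]]]]] := u_ne hU UNP.
have H : forall n, exists sr : R * 'I_k, NP n ->
    [/\ 0 <= sr.1 <= t, pis n sr.1 sr.2 = PNode R E v & t - sr.1 <= L + d].
  move=> n; have [[hn hP]|nNP] := pselect (NP n); last by exists (0, r0).
  have [y hy hyl] := sup_adherent d2 (vset_hsup hP).
  case: hy => hy [r hr]; exists (y, r) => _; split => //.
  move: hn; rewrite /= /latency lv_sup // => hn; lra.
have [g hg] := choice H.
have [r Ur] := u_fin (fun n => (g n).2) hU.
pose x n := if `[< NP n >] then (g n).1 else 0.
have hxb : forall n, 0 <= x n <= t.
  move=> n; rewrite /x; case: asboolP => [/(hg n) [] //|_]; by rewrite lexx t0.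
have hxe : forall n, NP n -> x n = (g n).1 by move=> n hn; rewrite /x; case: asboolP.
have [s [/andP[s0 st] hs]] := u_real hU hxb.
have ps : pi s r = PNode R E v.
  apply: (mdist_node0 hA hc ((hpi.1) s s0 r)) => eps e0.
  have e2 : 0 < eps / 2 by rewrite divr_gt0.
  have [n [[hNP hr] [hxs [h1 h2]]]] := u_ne hU (uI hU (uI hU UNP Ur) (uI hU (hs _ e2) (hcl s s0 r _ e2))).
  have [/andP[g0 gt] hgv _] := hg n hNP.
  move: hr hxs => /= hr; rewrite (hxe n hNP) => hxs.
  rewrite hr in hgv.
  have vn : valid_point A (pis n s r) := (hf n).1 s s0 r.
  have := mdist_tri hA hc ((hpi.1) s s0 r) vn (I : valid_point A (PNode R E v)).
  have := (hf n).2 s (g n).1 s0 g0 r; rewrite hgv.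
  move: hxs; rewrite ltr_norml distrC => /andP[hx1 hx2].
  have hab : `|(g n).1 - s| <= eps / 2.
    by rewrite ler_norml; apply/andP; split; lra.
  lra.
have ts : t - s <= L + d.
  apply: le_eps => eps e0.
  have [n [hNP hxs]] := u_ne hU (uI hU UNP (hs _ e0)).
  have [_ _ htl] := hg n hNP.
  move: hxs; rewrite /= (hxe n hNP) ltr_norml => /andP[hx1 hx2]; lra.
have : s <= last_visit pi v t.
  by apply: lv_ge; split; [rewrite s0 st|exists r].
lra.
Qed.


Lemma core (R : realType) (V E : finType) (ends : E -> V * V) (A : E -> R) (phi : V -> R) (k : nat)
  (c T0 : R) :
  (forall e, 0 < A e) -> (forall v, 0 < phi v) -> (forall a b, exists w, is_walk ends a b w) ->
  0 <= c -> 0 <= T0 ->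
  (forall n : nat, exists pi : strategy R V E k, feasible ends A pi /\
     forall t, T0 <= t -> worst_latency phi pi t <= c + (n.+1%:R)^-1) ->
  exists pi : strategy R V E k, feasible ends A pi /\
     forall t, T0 <= t -> worst_latency phi pi t <= c.
Proof.
move=> hA hphi hc c0 T00 H.
have [pis hpis] := choice H.
have [U hU] := ultra_exists.
have [pi [hpi hcl]] := limit_strategy hA hc hU (fun n => (hpis n).1).
exists pi; split => // t tT.
have t0 : 0 <= t by apply: le_trans tT.
rewrite /worst_latency; apply: bigmax_le => // v _.
have pv := hphi v.
have hL : phi v * (c / phi v) = c by rewrite mulrC divfK // gt_eqF.
suff : latency pi v t <= c / phi v.
  by move=> h; rewrite -hL ler_pM2l.
apply: (visit_limit hA hc hU (fun n => (hpis n).1) hpi hcl t0) => d d0.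
have [N hN] := small_inv (mulr_gt0 d0 pv).
apply: (uS hU) (uN hU N) => n /= nN.
have h1 : phi v * latency (pis n) v t <= worst_latency phi (pis n) t.
  by rewrite /worst_latency; apply: (le_bigmax _ (fun v => phi v * latency (pis n) v t)).
have h2 := (hpis n).2 t tT.
have h3 := hN n nN.
have key : phi v * (c / phi v + d) = c + phi v * d by rewrite mulrDr hL.
rewrite -(ler_pM2l pv) key.
have : phi v * d = d * phi v by rewrite mulrC.
move=> ->; apply: le_trans h1 _; apply: le_trans h2 _; rewrite lerD2l; exact: ltW.
Qed.


Definition shift (R : realType) (V E : finType) (k : nat) (pi : strategy R V E k) (T1 : R) :
  strategy R V E k := fun t r => pi (t + T1) r.

Lemma shift_feasible (R : realType) (V E : finType) (ends : E -> V * V) (A : E -> R) (k : nat)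
  (pi : strategy R V E k) T1 :
  0 <= T1 -> feasible ends A pi -> feasible ends A (shift pi T1).
Proof.
move=> T10 [hv hl]; split.
  by move=> t t0 r; apply: hv; rewrite addr_ge0.
move=> t t' t0 t'0 r; rewrite /shift.
have := hl (t + T1) (t' + T1) (addr_ge0 t0 T10) (addr_ge0 t'0 T10) r.
by rewrite opprD addrACA subrr addr0.
Qed.

Lemma wl_ge0 (R : realType) (V E : finType) (phi : V -> R) (k : nat) (pi : strategy R V E k) t :
  0 <= worst_latency phi pi t.
Proof.
rewrite /worst_latency; elim/big_rec: _ => // i x _ hx.
by rewrite le_max hx orbT.
Qed.

Lemma shift_wl (R : realType) (V E : finType) (phi : V -> R) (k : nat) (pi : strategy R V E k) T1 t :
  (forall v, 0 < phi v) -> 0 <= T1 -> 0 <= t ->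
  worst_latency phi (shift pi T1) t <= worst_latency phi pi (t + T1).
Proof.
move=> hphi T10 t0; rewrite {1}/worst_latency; apply: bigmax_le; first exact: wl_ge0.
move=> v _; apply: le_trans (le_bigmax _ (fun v => phi v * latency pi v (t + T1)) v).
rewrite ler_pM2l // /latency.
suff : last_visit pi v (t + T1) <= last_visit (shift pi T1) v t + T1 by lra.
have [ne|e] := pselect (vset pi v (t + T1) !=set0); last first.
  by rewrite lv_empty // addr_ge0 // lv_ge0.
rewrite lv_sup //; apply: ge_sup => // x [/andP[x0 xt] [r hr]].
have [xT|xT] := leP T1 x.
  have : vset (shift pi T1) v t (x - T1).
    split; first by apply/andP; split; lra.
    by exists r; rewrite /shift subrK.
  move/lv_ge; lra.
have := lv_ge0 (shift pi T1) v t; lra.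
Qed.

Lemma J_fin_ge0 (R : realType) (V E : finType) (phi : V -> R) (k : nat) (pi : strategy R V E k) T :
  (0 <= J_fin phi T pi)%E.
Proof.
apply: (@le_trans _ _ (worst_latency phi pi T)%:E); first by rewrite lee_fin wl_ge0.
by apply: ereal_sup_ubound; exists T => //=.
Qed.

Lemma J_fin_le (R : realType) (V E : finType) (phi : V -> R) (k : nat) (pi : strategy R V E k) T c :
  (forall t, T <= t -> worst_latency phi pi t <= c) -> (J_fin phi T pi <= c%:E)%E.
Proof. by move=> H; apply: ge_ereal_sup => _ [t tT <-]; rewrite lee_fin H. Qed.

Lemma J_fin_lt (R : realType) (V E : finType) (phi : V -> R) (k : nat) (pi : strategy R V E k) T c :
  (J_fin phi T pi < c%:E)%E -> forall t, T <= t -> worst_latency phi pi t <= c.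
Proof.
move=> H t tT; rewrite -lee_fin; apply: ltW; apply: le_lt_trans H.
by apply: ereal_sup_ubound; exists t.
Qed.


Unset Implicit Arguments. Set Strict Implicit.

Theorem mainTheorem1 (R : realType) (V E : finType) (ends : E -> V * V)
  (A : E -> R) (phi : V -> R) (k : nat) :
  (forall e, 0 < A e) -> (forall v, 0 < phi v) -> connected_graph ends ->
  (0 < k)%N ->
  forall T : \bar R, (0 <= T)%E ->
  exists pistar : strategy R V E k,
    feasible (k:=k) ends A pistar /\
    J (k:=k) phi T pistar =
      ereal_inf [set J (k:=k) phi T pi | pi in [set pi | feasible (k:=k) ends A pi]].
Proof.
move=> hA hphi [hV hc] hk T hT.
have /card_gt0P [v0 _] := hV.
pose pi0 : strategy R V E k := fun _ _ => PNode R E v0.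
have f0 : feasible ends A pi0.
  split => // t t' _ _ r; apply: le_trans (mdist_nn v0 hA hc) _; exact: normr_ge0.
set S := [set J phi T pi | pi in [set pi | feasible ends A pi]].
have JS : forall pi : strategy R V E k, feasible ends A pi -> (ereal_inf S <= J phi T pi)%E.
  by move=> pi fpi; apply: (@ereal_inf_lbound _ S); exists pi.
have Jge0 : forall pi : strategy R V E k, (0 <= J phi T pi)%E.
  move=> pi; case: (T) => [T'| |] /=; try exact: J_fin_ge0.
  by apply: le_ereal_inf_tmp => _ [T' _ <-]; apply: J_fin_ge0.
have S0 : (0 <= ereal_inf S)%E by apply: le_ereal_inf_tmp => _ [pi _ <-]; exact: Jge0.
have [/eqP Sinf|Sfin] := boolP (ereal_inf S == +oo%E).
  exists pi0; split => //; apply/eqP; rewrite eq_le JS // andbT Sinf leey //.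
have [c Sc] : exists c, ereal_inf S = c%:E.
  by move: S0 Sfin; case: (ereal_inf S) => [c| |] //; exists c.
have c0 : 0 <= c by rewrite -lee_fin -Sc.
pose T0 := if T is EFin T' then T' else 0.
have T00 : 0 <= T0 by rewrite /T0; case: (T) hT => [T'| |] //=; rewrite lee_fin.
have H : forall n : nat, exists pi : strategy R V E k, feasible ends A pi /\
     forall t, T0 <= t -> worst_latency phi pi t <= c + (n.+1%:R)^-1.
  move=> n.
  have : (ereal_inf S < (c + (n.+1%:R)^-1)%:E)%E by rewrite Sc lte_fin ltrDl invr_gt0 ltr0Sn.
  move=> /ereal_inf_lt [_ [pi fpi <-] hlt].
  move: hlt; rewrite /T0; case: (T) hT => [T'| |] //= _ hlt.
    by exists pi; split => //; apply: J_fin_lt.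
  move: hlt => /ereal_inf_lt [_ [T1 T10 <-] hlt].
  exists (shift pi T1); split; first exact: shift_feasible.
  move=> t t0; apply: le_trans (shift_wl _ hphi T10 t0) _.
  by apply: (J_fin_lt hlt); lra.
have [pis [fpis hpis]] := core hA hphi hc c0 T00 H.
exists pis; split => //; apply/eqP; rewrite eq_le JS // andbT Sc.
move: hpis; rewrite /T0; case: (T) hT => [T'| |] //= _ hpis.
  exact: J_fin_le.
apply: (@le_trans _ _ (J_fin phi 0 pis)); last exact: J_fin_le.
rewrite /J_inf; apply: ereal_inf_lbound; by exists 0 => //=.
Qed.
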